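(* For $A=\mathbb{F}_8$ with calculus as in the context, and for each $\beta\in\{y^2,1+y^2,1+y\}$, among the twelve QLCs of the metric $g=\beta g_0$ exactly five are flat (hence have $\mathrm{Ricci}=0$ for every lift), and among the seven non-flat QLCs there is exactly one $\nabla$ for which some lift $i$ yields $\mathrm{Ricci}+S\,g=0$.
   Context: Algebra F: $A=\mathbb{F}_2[y]/(y^3+y^2+1)\cong\mathbb{F}_8$ with $x=y^2$. $\Omega^1$ is free as a left module on $\omega^1=\mathrm{d}x$, $\omega^2=\mathrm{d}y$, with $\omega^1x=(1+x)\omega^1+\omega^2$, $\omega^1y=\omega^1+x\omega^2$, $\omega^2x=(1+y)\omega^1$, $\omega^2y=\omega^1+y\omega^2$. $\Omega^2=A\,\mathrm{Vol}$ free, $\mathrm{Vol}$ central, $\omega^1\wedge\omega^1=y\,\mathrm{Vol}$, $\omega^1\wedge\omega^2=\omega^2\wedge\omega^1=\mathrm{Vol}$, $\omega^2\wedge\omega^2=(1+y)\mathrm{Vol}$, $\mathrm{d}\omega^i=0$. $g_0=y^2\,\omega^1\otimes\omega^1+\omega^1\otimes\omega^2+\omega^2\otimes\omega^1+(1+y)\,\omega^2\otimes\omega^2$. For an invertible metric $g$, $(\ ,\ ):\Omega^1\otimes_A\Omega^1\to A$ is the bimodule map with $((\eta,\ )\otimes\mathrm{id})g=\eta=(\mathrm{id}\otimes(\ ,\eta))g$. A QLC for $g$ is a bimodule connection ($\nabla(a\omega)=a\nabla\omega+\mathrm{d}a\otimes\omega$, $\nabla(\omega a)=(\nabla\omega)a+\sigma(\omega\otimes\mathrm{d}a)$,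 $\sigma$ a bimodule map) that is torsion free ($\wedge\nabla=\mathrm{d}$) and metric compatible ($(\nabla\otimes\mathrm{id})g+(\sigma\otimes\mathrm{id})(\mathrm{id}\otimes\nabla)g=0$). Curvature $R_\nabla=(\mathrm{d}\otimes\mathrm{id}-\mathrm{id}\wedge\nabla)\nabla:\Omega^1\to\Omega^2\otimes_A\Omega^1$; flat means $R_\nabla=0$. A lift is a bimodule map $i:\Omega^2\to\Omega^1\otimes_A\Omega^1$ with $\wedge\circ i=\mathrm{id}$; the lifts are exactly $i_\gamma(\mathrm{Vol})=(1+y^2)\omega^1\otimes\omega^1+y\,\omega^1\otimes\omega^2+\omega^2\otimes\omega^1+(1+y)\omega^2\otimes\omega^2+\gamma g_0$, $\gamma\in A$. Given a lift, $\mathrm{Ricci}=((\ ,\ )\otimes\mathrm{id})(\mathrm{id}\otimes i\otimes\mathrm{id})(\mathrm{id}\otimes R_\nabla)g$ and $S=(\ ,\ )(\mathrm{Ricci})\in A$. *)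

(* Defs.v *)
From HB Require Import structures.
From mathcomp Require Import all_boot all_order all_algebra.
Set Implicit Arguments. Unset Strict Implicit. Unset Printing Implicit Defensive.
Import GRing.Theory.
Local Open Scope ring_scope.

(* mkF8 c0 c1 c2 represents c0 + c1 y + c2 y^2. *)
Record F8 := mkF8 { f0 : bool; f1 : bool; f2 : bool }.

Definition F8_to (a : F8) : bool * bool * bool := (f0 a, f1 a, f2 a).
Definition F8_of (t : bool * bool * bool) : F8 := mkF8 t.1.1 t.1.2 t.2.
Lemma F8_toK : cancel F8_to F8_of. Proof. by case. Qed.
HB.instance Definition _ := Finite.copy F8 (can_type F8_toK).

Definition F8zero := mkF8 false false false.
Definition F8one := mkF8 true false false.
Definition F8add (a b : F8) := mkF8 (f0 a (+) f0 b) (f1 a (+) f1 b) (f2 a (+) f2 b).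
Definition F8opp (a : F8) := a.
(* product of polynomials, reduced with y^3 = 1 + y^2, y^4 = 1 + y + y^2 *)
Definition F8mul (a b : F8) :=
  let p0 := f0 a && f0 b in
  let p1 := (f0 a && f1 b) (+) (f1 a && f0 b) in
  let p2 := (f0 a && f2 b) (+) (f1 a && f1 b) (+) (f2 a && f0 b) in
  let p3 := (f1 a && f2 b) (+) (f2 a && f1 b) in
  let p4 := f2 a && f2 b in
  mkF8 (p0 (+) p3 (+) p4) (p1 (+) p4) (p2 (+) p3 (+) p4).

Lemma F8addA : associative F8add.
Proof. by do 3![case=> [[] [] []]]. Qed.
Lemma F8addC : commutative F8add.
Proof. by do 2![case=> [[] [] []]]. Qed.
Lemma F8add0 : left_id F8zero F8add.
Proof. by case=> [[] [] []]. Qed.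
Lemma F8addN : left_inverse F8zero F8opp F8add.
Proof. by case=> [[] [] []]. Qed.
HB.instance Definition _ := GRing.isZmodule.Build F8 F8addA F8addC F8add0 F8addN.

Lemma F8mulA : associative F8mul.
Proof. by do 3![case=> [[] [] []]]. Qed.
Lemma F8mulC : commutative F8mul.
Proof. by do 2![case=> [[] [] []]]. Qed.
Lemma F8mul1 : left_id F8one F8mul.
Proof. by case=> [[] [] []]. Qed.
Lemma F8mulDl : left_distributive F8mul F8add.
Proof. by do 3![case=> [[] [] []]]. Qed.
Lemma F8one_neq0 : F8one != F8zero. Proof. by []. Qed.
HB.instance Definition _ :=
  GRing.Zmodule_isComNzRing.Build F8 F8mulA F8mulC F8mul1 F8mulDl F8one_neq0.

Definition yA : F8 := mkF8 false true false.
Definition xA : F8 := yA * yA.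

Definition bF (b : bool) : F8 := if b then 1 else 0.

(* An element v : 'rV_2 stands for v_0 omega^1 + v_1 omega^2
   (index 0 <-> omega^1 = dx, index 1 <-> omega^2 = dy). *)
Definition om (i : 'I_2) : 'rV[F8]_2 := delta_mx 0 i.
Definition i0 : 'I_2 := ord0.
Definition i1 : 'I_2 := ord_max.

(* omega^i . y  and  omega^i . x  (rows i) *)
Definition Ry : 'M[F8]_2 :=
  \matrix_(i, j) if i == i0 then (if j == i0 then 1 else xA)
                            else (if j == i0 then 1 else yA).
Definition Rx : 'M[F8]_2 :=
  \matrix_(i, j) if i == i0 then (if j == i0 then 1 + xA else 1)
                            else (if j == i0 then 1 + yA else 0).
(* right action of a = c0 + c1 y + c2 x on the basis (row i = omega^i . a);
   right multiplication is additive and F_2-scalars are central. *)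
Definition Rmat (a : F8) : 'M[F8]_2 :=
  bF (f0 a) *: 1%:M + bF (f1 a) *: Ry + bF (f2 a) *: Rx.
Definition ract (v : 'rV[F8]_2) (a : F8) : 'rV[F8]_2 := v *m Rmat a.

Definition dA (a : F8) : 'rV[F8]_2 := bF (f2 a) *: om i0 + bF (f1 a) *: om i1.

(* T : 'M_2 stands for sum_{ij} T i j omega^i (x) omega^j *)
Definition tens (u v : 'rV[F8]_2) : 'M[F8]_2 :=
  \matrix_(l, j) \sum_(i < 2) u 0 i * Rmat (v 0 j) i l.
Definition rmulT (T : 'M[F8]_2) (a : F8) : 'M[F8]_2 :=
  \sum_(i < 2) \sum_(j < 2) tens (T i j *: om i) (ract (om j) a).

Definition Wm : 'M[F8]_2 :=
  \matrix_(i, j) if i == i0 then (if j == i0 then yA else 1)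
                            else (if j == i0 then 1 else 1 + yA).
Definition wedgeT (T : 'M[F8]_2) : F8 := \sum_(i < 2) \sum_(j < 2) T i j * Wm i j.
Definition wedge (u v : 'rV[F8]_2) : F8 := wedgeT (tens u v).
(* d on Omega^1 (d omega^i = 0):  d(sum a_i omega^i) = sum da_i /\ omega^i *)
Definition dO (v : 'rV[F8]_2) : F8 := \sum_(i < 2) wedge (dA (v 0 i)) (om i).

Definition g0 : 'M[F8]_2 :=
  \matrix_(i, j) if i == i0 then (if j == i0 then yA * yA else 1)
                            else (if j == i0 then 1 else 1 + yA).

(* a bimodule map ( , ) : Omega^1 (x) Omega^1 -> A, given by P i j = (omega^i, omega^j) *)
Definition pair (P : 'M[F8]_2) (T : 'M[F8]_2) : F8 := \sum_(i < 2) \sum_(j < 2) T i j * P i j.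

Definition inv_pairing (g P : 'M[F8]_2) : bool :=
  [forall T : 'M[F8]_2, forall a : F8, pair P (rmulT T a) == pair P T * a] &&
  [forall eta : 'rV[F8]_2,
     (\sum_(p < 2) \sum_(q < 2) pair P (tens eta (g p q *: om p)) *: om q == eta) &&
     (\sum_(p < 2) \sum_(q < 2) ract (g p q *: om p) (pair P (tens (om q) eta)) == eta)].

(* A left connection is determined by Gam i = nabla omega^i. *)
Definition nabla (Gam : {ffun 'I_2 -> 'M[F8]_2}) (v : 'rV[F8]_2) : 'M[F8]_2 :=
  \sum_(i < 2) (v 0 i *: Gam i + tens (dA (v 0 i)) (om i)).

Definition sig (s : {ffun 'I_2 * 'I_2 -> 'M[F8]_2}) (T : 'M[F8]_2) : 'M[F8]_2 :=
  \sum_(i < 2) \sum_(j < 2) T i j *: s (i, j).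

Definition bimod_sig (s : {ffun 'I_2 * 'I_2 -> 'M[F8]_2}) : bool :=
  [forall T : 'M[F8]_2, forall a : F8, sig s (rmulT T a) == rmulT (sig s T) a].

Definition right_leibniz Gam s : bool :=
  [forall v : 'rV[F8]_2, forall a : F8,
     nabla Gam (ract v a) == rmulT (nabla Gam v) a + sig s (tens v (dA a))].

Definition torsion_free Gam : bool :=
  [forall v : 'rV[F8]_2, wedgeT (nabla Gam v) == dO v].

(* (nabla (x) id) g + (sigma (x) id)(id (x) nabla) g = 0 ; an element of
   Omega^1 (x) Omega^1 (x) Omega^1 is written sum_c M_c (x) omega^c. *)
Definition metric_compatible (g : 'M[F8]_2) Gam s : bool :=
  [forall c : 'I_2,
     \sum_(p < 2) nabla Gam (g p c *: om p)
   + \sum_(p < 2) \sum_(q < 2) \sum_(k < 2) sig s (tens (g p q *: om p) (Gam q k c *: om k))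
   == 0].

Definition QLC (g : 'M[F8]_2) (Gam : {ffun 'I_2 -> 'M[F8]_2}) : bool :=
  [exists s, [&& bimod_sig s, right_leibniz Gam s, torsion_free Gam
              & metric_compatible g Gam s]].

(* R(v) in Omega^2 (x) Omega^1, written as the coefficients of Vol (x) omega^l *)
Definition curv Gam (v : 'rV[F8]_2) : 'rV[F8]_2 :=
  let N := nabla Gam v in
  \sum_(i < 2) \sum_(j < 2)
     (dO (N i j *: om i) *: om j
      - \sum_(k < 2) \sum_(l < 2) wedge (N i j *: om i) (Gam j k l *: om k) *: om l).

Definition flat Gam : bool := [forall v : 'rV[F8]_2, curv Gam v == 0].

(* a bimodule map i : Omega^2 -> Omega^1 (x) Omega^1 is determined by t = i(Vol) *)
Definition is_lift (t : 'M[F8]_2) : bool :=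
  [forall a : F8, rmulT t a == a *: t] && (wedgeT t == 1).

Definition Ricci (g P t : 'M[F8]_2) Gam : 'M[F8]_2 :=
  \matrix_(n, l) \sum_(p < 2) \sum_(q < 2) \sum_(m < 2)
     pair P (tens (ract (g p q *: om p) (curv Gam (om q) 0 l)) (t m n *: om m)).

Definition Scal (g P t : 'M[F8]_2) Gam : F8 := pair P (Ricci g P t Gam).

(* Main.v *)
Require Import Defs.
From HB Require Import structures.
From mathcomp Require Import all_boot all_order all_algebra.
Import GRing.Theory.
Local Open Scope ring_scope.
Set Implicit Arguments. Unset Strict Implicit. Unset Printing Implicit Defensive.

Inductive E8 := E0 | E1 | E2 | E3 | E4 | E5 | E6 | E7.
Definition dec (e : E8) : F8 := match e with E0 => mkF8 false false false | E1 => mkF8 true false false | E2 => mkF8 false true false | E3 => mkF8 true true false | E4 => mkF8 false false true | E5 => mkF8 true false true | E6 => mkF8 false true true | E7 => mkF8 true true true end.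
Definition enc (a : F8) : E8 := match a with mkF8 false false false => E0 | mkF8 true false false => E1 | mkF8 false true false => E2 | mkF8 true true false => E3 | mkF8 false false true => E4 | mkF8 true false true => E5 | mkF8 false true true => E6 | mkF8 true true true => E7 end.
Definition add8 (a b : E8) : E8 := match a, b with
  | E0, E0 => E0
  | E0, E1 => E1
  | E0, E2 => E2
  | E0, E3 => E3
  | E0, E4 => E4
  | E0, E5 => E5
  | E0, E6 => E6
  | E0, E7 => E7
  | E1, E0 => E1
  | E1, E1 => E0
  | E1, E2 => E3
  | E1, E3 => E2
  | E1, E4 => E5
  | E1, E5 => E4
  | E1, E6 => E7
  | E1, E7 => E6
  | E2, E0 => E2
  | E2, E1 => E3
  | E2, E2 => E0
  | E2, E3 => E1
  | E2, E4 => E6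
  | E2, E5 => E7
  | E2, E6 => E4
  | E2, E7 => E5
  | E3, E0 => E3
  | E3, E1 => E2
  | E3, E2 => E1
  | E3, E3 => E0
  | E3, E4 => E7
  | E3, E5 => E6
  | E3, E6 => E5
  | E3, E7 => E4
  | E4, E0 => E4
  | E4, E1 => E5
  | E4, E2 => E6
  | E4, E3 => E7
  | E4, E4 => E0
  | E4, E5 => E1
  | E4, E6 => E2
  | E4, E7 => E3
  | E5, E0 => E5
  | E5, E1 => E4
  | E5, E2 => E7
  | E5, E3 => E6
  | E5, E4 => E1
  | E5, E5 => E0
  | E5, E6 => E3
  | E5, E7 => E2
  | E6, E0 => E6
  | E6, E1 => E7
  | E6, E2 => E4
  | E6, E3 => E5
  | E6, E4 => E2
  | E6, E5 => E3
  | E6, E6 => E0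
  | E6, E7 => E1
  | E7, E0 => E7
  | E7, E1 => E6
  | E7, E2 => E5
  | E7, E3 => E4
  | E7, E4 => E3
  | E7, E5 => E2
  | E7, E6 => E1
  | E7, E7 => E0 end.
Definition mul8 (a b : E8) : E8 := match a, b with
  | E0, E0 => E0
  | E0, E1 => E0
  | E0, E2 => E0
  | E0, E3 => E0
  | E0, E4 => E0
  | E0, E5 => E0
  | E0, E6 => E0
  | E0, E7 => E0
  | E1, E0 => E0
  | E1, E1 => E1
  | E1, E2 => E2
  | E1, E3 => E3
  | E1, E4 => E4
  | E1, E5 => E5
  | E1, E6 => E6
  | E1, E7 => E7
  | E2, E0 => E0
  | E2, E1 => E2
  | E2, E2 => E4
  | E2, E3 => E6
  | E2, E4 => E5
  | E2, E5 => E7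
  | E2, E6 => E1
  | E2, E7 => E3
  | E3, E0 => E0
  | E3, E1 => E3
  | E3, E2 => E6
  | E3, E3 => E5
  | E3, E4 => E1
  | E3, E5 => E2
  | E3, E6 => E7
  | E3, E7 => E4
  | E4, E0 => E0
  | E4, E1 => E4
  | E4, E2 => E5
  | E4, E3 => E1
  | E4, E4 => E7
  | E4, E5 => E3
  | E4, E6 => E2
  | E4, E7 => E6
  | E5, E0 => E0
  | E5, E1 => E5
  | E5, E2 => E7
  | E5, E3 => E2
  | E5, E4 => E3
  | E5, E5 => E6
  | E5, E6 => E4
  | E5, E7 => E1
  | E6, E0 => E0
  | E6, E1 => E6
  | E6, E2 => E1
  | E6, E3 => E7
  | E6, E4 => E2
  | E6, E5 => E4
  | E6, E6 => E3
  | E6, E7 => E5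
  | E7, E0 => E0
  | E7, E1 => E7
  | E7, E2 => E3
  | E7, E3 => E4
  | E7, E4 => E6
  | E7, E5 => E1
  | E7, E6 => E5
  | E7, E7 => E2 end.
Definition eqE8 (a b : E8) : bool := match a, b with
  | E0, E0 => true
  | E1, E1 => true
  | E2, E2 => true
  | E3, E3 => true
  | E4, E4 => true
  | E5, E5 => true
  | E6, E6 => true
  | E7, E7 => true
  | _, _ => false end.
Definition R8 (a : E8) : (E8 * E8) * (E8 * E8) := match a with E0 => ((E0, E0), (E0, E0)) | E1 => ((E1, E0), (E0, E1)) | E2 => ((E1, E4), (E1, E2)) | E3 => ((E0, E4), (E1, E3)) | E4 => ((E5, E1), (E3, E0)) | E5 => ((E4, E1), (E3, E1)) | E6 => ((E4, E5), (E2, E2)) | E7 => ((E5, E5), (E2, E3)) end.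
Definition dA8 (a : E8) : E8 * E8 := match a with E0 => (E0, E0) | E1 => (E0, E0) | E2 => (E0, E1) | E3 => (E0, E1) | E4 => (E1, E0) | E5 => (E1, E0) | E6 => (E1, E1) | E7 => (E1, E1) end.

Lemma eqE8P : Equality.axiom eqE8.
Proof. by case; case; constructor. Qed.
HB.instance Definition _ := hasDecEq.Build E8 eqE8P.

Lemma decK : cancel dec enc. Proof. by case. Qed.
Lemma encK : cancel enc dec. Proof. by case=> [[] [] []]. Qed.
Lemma dec_inj : injective dec. Proof. exact: can_inj decK. Qed.
Lemma dec_eq a b : (dec a == dec b) = (a == b).
Proof. by apply/eqP/eqP => [/dec_inj|->]. Qed.
Lemma dec_add a b : dec a + dec b = dec (add8 a b). Proof. by case: a; case: b. Qed.
Lemma dec_mul a b : dec a * dec b = dec (mul8 a b). Proof. by case: a; case: b. Qed.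
Lemma dec_opp a : - dec a = dec a. Proof. by case: a. Qed.
Lemma dec0 : 0 = dec E0. Proof. by []. Qed.
Lemma dec1 : 1 = dec E1. Proof. by []. Qed.
Lemma yAE : yA = dec E2. Proof. by []. Qed.
Lemma xAE : xA = dec E4. Proof. by []. Qed.

Definition z2 (i : 'I_2) : bool := if nat_of_ord i is 0%N then true else false.

Definition m2 := ((E8 * E8) * (E8 * E8))%type.
Definition v2 := (E8 * E8)%type.
Definition ent (m : m2) (i j : 'I_2) : E8 :=
  if z2 i then (if z2 j then m.1.1 else m.1.2) else (if z2 j then m.2.1 else m.2.2).
Definition vent (v : v2) (j : 'I_2) : E8 := if z2 j then v.1 else v.2.
Definition toM (m : m2) : 'M[F8]_2 := \matrix_(i, j) dec (ent m i j).
Definition toV (v : v2) : 'rV[F8]_2 := \row_j dec (vent v j).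
Definition ofM (M : 'M[F8]_2) : m2 := ((enc (M i0 i0), enc (M i0 i1)), (enc (M i1 i0), enc (M i1 i1))).
Definition ofV (v : 'rV[F8]_2) : v2 := (enc (v 0 i0), enc (v 0 i1)).

Lemma ord2 (i : 'I_2) : i = i0 \/ i = i1.
Proof. case: i => m Hi; case: m Hi => [|[|m]] Hi; [left|right|by []]; exact: val_inj. Qed.

Lemma sum2 (V : nmodType) (F : 'I_2 -> V) : \sum_(i < 2) F i = F i0 + F i1.
Proof. rewrite big_ord_recr big_ord1; congr (F _ + _); exact: val_inj. Qed.

Lemma toME m i j : toM m i j = dec (ent m i j). Proof. by rewrite mxE. Qed.
Lemma toVE v i j : toV v i j = dec (vent v j). Proof. by rewrite mxE. Qed.

Lemma ofMK M : toM (ofM M) = M.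
Proof. apply/matrixP=> i j; rewrite mxE /ent; by case: (ord2 i) => ->; case: (ord2 j) => ->; rewrite /= encK. Qed.
Lemma ofVK v : toV (ofV v) = v.
Proof. apply/matrixP=> i j; rewrite mxE /vent (ord1 i); by case: (ord2 j) => ->; rewrite /= encK. Qed.
Lemma toMK m : ofM (toM m) = m.
Proof. by case: m => [[a b] [c d]]; rewrite /ofM !mxE /= !decK. Qed.
Lemma toVK v : ofV (toV v) = v.
Proof. by case: v => a b; rewrite /ofV !mxE /= !decK. Qed.

Lemma toM_inj : injective toM. Proof. by move=> m n E; rewrite -(toMK m) E toMK. Qed.
Lemma toV_inj : injective toV. Proof. by move=> m n E; rewrite -(toVK m) E toVK. Qed.
Lemma toM_eq m n : (toM m == toM n) = (m == n).
Proof. by apply/eqP/eqP => [/toM_inj|->]. Qed.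
Lemma toV_eq m n : (toV m == toV n) = (m == n).
Proof. by apply/eqP/eqP => [/toV_inj|->]. Qed.

Definition madd (m n : m2) : m2 := ((add8 m.1.1 n.1.1, add8 m.1.2 n.1.2), (add8 m.2.1 n.2.1, add8 m.2.2 n.2.2)).
Definition msc (c : E8) (m : m2) : m2 := ((mul8 c m.1.1, mul8 c m.1.2), (mul8 c m.2.1, mul8 c m.2.2)).
Definition vadd (v w : v2) : v2 := (add8 v.1 w.1, add8 v.2 w.2).
Definition vsc (c : E8) (v : v2) : v2 := (mul8 c v.1, mul8 c v.2).
Definition mz : m2 := ((E0,E0),(E0,E0)).
Definition vz : v2 := (E0,E0).

Ltac mcase i j := rewrite !mxE /ent; case: (ord2 i) => ->; case: (ord2 j) => ->.
Lemma toM_add m n : toM m + toM n = toM (madd m n).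
Proof. by apply/matrixP=> i j; mcase i j; rewrite dec_add. Qed.
Lemma toM_sc c m : dec c *: toM m = toM (msc c m).
Proof. by apply/matrixP=> i j; mcase i j; rewrite dec_mul. Qed.
Lemma toM_neg m : - toM m = toM m.
Proof. by apply/matrixP=> i j; mcase i j; rewrite dec_opp. Qed.
Lemma toM_0 : 0 = toM mz.
Proof. by apply/matrixP=> i j; mcase i j. Qed.
Lemma toV_add m n : toV m + toV n = toV (vadd m n).
Proof. by apply/matrixP=> i j; rewrite !mxE /vent; case: (ord2 j) => ->; rewrite dec_add. Qed.
Lemma toV_sc c m : dec c *: toV m = toV (vsc c m).
Proof. by apply/matrixP=> i j; rewrite !mxE /vent; case: (ord2 j) => ->; rewrite dec_mul. Qed.
Lemma toV_neg m : - toV m = toV m.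
Proof. by apply/matrixP=> i j; rewrite !mxE /vent; case: (ord2 j) => ->; rewrite dec_opp. Qed.
Lemma toV_0 : 0 = toV vz.
Proof. by apply/matrixP=> i j; rewrite !mxE /vent; case: (ord2 j) => ->. Qed.

Definition eV (i : 'I_2) : v2 := if z2 i then (E1,E0) else (E0,E1).
Lemma omE i : om i = toV (eV i).
Proof. apply/matrixP=> k j; rewrite !mxE /vent /eV (ord1 k) /=;
  by case: (ord2 i) => ->; case: (ord2 j) => ->. Qed.

Definition vmul (v : v2) (m : m2) : v2 :=
  (add8 (mul8 v.1 m.1.1) (mul8 v.2 m.2.1), add8 (mul8 v.1 m.1.2) (mul8 v.2 m.2.2)).
Lemma toV_mul v m : toV v *m toM m = toV (vmul v m).
Proof. apply/matrixP=> k j; rewrite !mxE sum2 !mxE /vent /ent /=;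
  by case: (ord2 j) => -> /=; rewrite !dec_mul dec_add. Qed.

Definition mkm (f : 'I_2 -> 'I_2 -> E8) : m2 := ((f i0 i0, f i0 i1), (f i1 i0, f i1 i1)).
Lemma toM_mk f : \matrix_(i, j) dec (f i j) = toM (mkm f).
Proof. apply/matrixP=> i j; rewrite !mxE /ent /=; by case: (ord2 i) => ->; case: (ord2 j) => ->. Qed.

Definition WmC : m2 := ((E2,E1),(E1,E3)).
Definition g0C : m2 := ((E4,E1),(E1,E3)).
Lemma WmE : Wm = toM WmC.
Proof. apply/matrixP=> i j; rewrite !mxE /ent /=; by case: (ord2 i) => ->; case: (ord2 j) => ->. Qed.
Lemma g0E : g0 = toM g0C.
Proof. apply/matrixP=> i j; rewrite !mxE /ent /=; by case: (ord2 i) => ->; case: (ord2 j) => ->. Qed.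

Lemma RmatE a : Rmat (dec a) = toM (R8 a).
Proof. apply/matrixP=> i j; rewrite !mxE /ent.
by case: a; case: (ord2 i) => ->; case: (ord2 j) => ->. Qed.

Definition ractC (v : v2) (a : E8) : v2 := vmul v (R8 a).
Lemma ractE v a : ract (toV v) (dec a) = toV (ractC v a).
Proof. by rewrite /ract RmatE toV_mul. Qed.

Lemma dAE a : dA (dec a) = toV (dA8 a).
Proof. apply/matrixP=> i j; rewrite !mxE /vent (ord1 i).
by case: a; case: (ord2 j) => ->. Qed.

Definition tensC (u v : v2) : m2 :=
  let R0 := R8 (vent v i0) in let R1 := R8 (vent v i1) in
  mkm (fun l j => let R := if z2 j then R0 else R1 in
       add8 (mul8 (vent u i0) (ent R i0 l)) (mul8 (vent u i1) (ent R i1 l))).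
Lemma tensE u v : tens (toV u) (toV v) = toM (tensC u v).
Proof.
rewrite /tens /tensC /= -toM_mk; apply/matrixP=> l j; rewrite !mxE sum2 !toVE !RmatE !toME.
rewrite !dec_mul dec_add; by case: (ord2 j) => ->.
Qed.

Definition m4 (f : 'I_2 -> 'I_2 -> m2) : m2 := madd (madd (f i0 i0) (f i0 i1)) (madd (f i1 i0) (f i1 i1)).
Definition s4 (f : 'I_2 -> 'I_2 -> E8) : E8 := add8 (add8 (f i0 i0) (f i0 i1)) (add8 (f i1 i0) (f i1 i1)).

Definition rmulTC (T : m2) (a : E8) : m2 :=
  m4 (fun i j => tensC (vsc (ent T i j) (eV i)) (ractC (eV j) a)).
Lemma rmulTE T a : rmulT (toM T) (dec a) = toM (rmulTC T a).
Proof. rewrite /rmulT !sum2 !toME !omE !toV_sc !ractE !tensE !toM_add. reflexivity. Qed.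

Definition wedgeTC (T : m2) : E8 := s4 (fun i j => mul8 (ent T i j) (ent WmC i j)).
Lemma wedgeTE T : wedgeT (toM T) = dec (wedgeTC T).
Proof. rewrite /wedgeT !sum2 WmE !toME !dec_mul !dec_add. reflexivity. Qed.
Definition wedgeC u v := wedgeTC (tensC u v).
Lemma wedgeE u v : wedge (toV u) (toV v) = dec (wedgeC u v).
Proof. by rewrite /wedge tensE wedgeTE. Qed.

Definition dOC (v : v2) : E8 := add8 (wedgeC (dA8 (vent v i0)) (eV i0)) (wedgeC (dA8 (vent v i1)) (eV i1)).
Lemma dOE v : dO (toV v) = dec (dOC v).
Proof. rewrite /dO sum2 !toVE !dAE !omE !wedgeE dec_add. reflexivity. Qed.

Definition pairC (P T : m2) : E8 := s4 (fun i j => mul8 (ent T i j) (ent P i j)).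
Lemma pairE P T : pair (toM P) (toM T) = dec (pairC P T).
Proof. rewrite /pair !sum2 !toME !dec_mul !dec_add. reflexivity. Qed.

Definition gam := (m2 * m2)%type.
Definition Gent (G : gam) (i : 'I_2) : m2 := if z2 i then G.1 else G.2.
Definition toG (G : gam) : {ffun 'I_2 -> 'M[F8]_2} := [ffun i => toM (Gent G i)].
Definition ofG (Gam : {ffun 'I_2 -> 'M[F8]_2}) : gam := (ofM (Gam i0), ofM (Gam i1)).
Lemma toGE G i : toG G i = toM (Gent G i). Proof. by rewrite ffunE. Qed.
Lemma ofGK Gam : toG (ofG Gam) = Gam.
Proof. apply/ffunP=> i; rewrite ffunE /Gent; case: (ord2 i) => -> /=; by rewrite ofMK. Qed.
Lemma toGK G : ofG (toG G) = G.
Proof. by case: G => a b; rewrite /ofG !toGE /Gent /= !toMK. Qed.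
Lemma toG_inj : injective toG. Proof. by move=> m n E; rewrite -(toGK m) E toGK. Qed.

Definition nablaC (G : gam) (v : v2) : m2 :=
  madd (madd (msc (vent v i0) (Gent G i0)) (tensC (dA8 (vent v i0)) (eV i0)))
       (madd (msc (vent v i1) (Gent G i1)) (tensC (dA8 (vent v i1)) (eV i1))).
Lemma nablaE G v : nabla (toG G) (toV v) = toM (nablaC G v).
Proof. rewrite /nabla sum2 !toVE !toGE !dAE !omE !tensE !toM_sc !toM_add. reflexivity. Qed.

Definition sm := ((m2 * m2) * (m2 * m2))%type.
Definition Sent (s : sm) (i j : 'I_2) : m2 :=
  if z2 i then (if z2 j then s.1.1 else s.1.2) else (if z2 j then s.2.1 else s.2.2).
Definition toS (s : sm) : {ffun 'I_2 * 'I_2 -> 'M[F8]_2} := [ffun ij => toM (Sent s ij.1 ij.2)].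
Lemma toSE s i j : toS s (i, j) = toM (Sent s i j). Proof. by rewrite ffunE. Qed.
Definition sigC (s : sm) (T : m2) : m2 := m4 (fun i j => msc (ent T i j) (Sent s i j)).
Lemma sigE s T : sig (toS s) (toM T) = toM (sigC s T).
Proof. rewrite /sig !sum2 !toSE !toME !toM_sc !toM_add. reflexivity. Qed.

Definition mc2 (f : 'I_2 -> m2) : m2 := madd (f i0) (f i1).
Definition v4 (f : 'I_2 -> v2) : v2 := vadd (f i0) (f i1).

Definition mcC (g : m2) (G : gam) (s : sm) (c : 'I_2) : m2 :=
  madd (mc2 (fun p => nablaC G (vsc (ent g p c) (eV p))))
       (mc2 (fun p => mc2 (fun q => mc2 (fun k =>
          sigC s (tensC (vsc (ent g p q) (eV p)) (vsc (ent (Gent G q) k c) (eV k))))))).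
Lemma mcE g G s c :
  (\sum_(p < 2) nabla (toG G) (toM g p c *: om p)
   + \sum_(p < 2) \sum_(q < 2) \sum_(k < 2) sig (toS s) (tens (toM g p q *: om p) (toG G q k c *: om k))
   == 0) = (mcC g G s c == mz).
Proof.
rewrite !sum2 !toGE !toME !omE !toV_sc !tensE !sigE !nablaE !toM_add toM_0 toM_eq.
reflexivity.
Qed.

Lemma forall_I2 (P : pred 'I_2) : [forall c, P c] = P i0 && P i1.
Proof.
apply/forallP/andP => [H|[H0 H1] c]; first by split; apply: H.
by case: (ord2 c) => ->.
Qed.

Definition mcB g G s := (mcC g G s i0 == mz) && (mcC g G s i1 == mz).
Lemma metricE g G s : metric_compatible (toM g) (toG G) (toS s) = mcB g G s.
Proof. by rewrite /metric_compatible forall_I2 !mcE. Qed.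

Definition curvC (G : gam) (v : v2) : v2 :=
  let N := nablaC G v in
  v4 (fun i => v4 (fun j =>
    vadd (vsc (dOC (vsc (ent N i j) (eV i))) (eV j))
         (v4 (fun k => v4 (fun l =>
            vsc (wedgeC (vsc (ent N i j) (eV i)) (vsc (ent (Gent G j) k l) (eV k))) (eV l)))))).
Lemma curvE G v : curv (toG G) (toV v) = toV (curvC G v).
Proof.
rewrite /curv; cbv zeta.
rewrite nablaE [dO]lock [wedge]lock !sum2 -!lock.
rewrite [dO]lock [wedge]lock.
rewrite !toME !toGE !toME !omE !toV_sc -!lock.
rewrite !wedgeE !dOE ?toV_sc !(toV_neg, toV_add).
reflexivity.
Qed.

Definition allE8 : seq E8 := [:: E0; E1; E2; E3; E4; E5; E6; E7].
Definition allV : seq v2 := [seq (a,b) | a <- allE8, b <- allE8].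
Definition allM : seq m2 := [seq (u,v) | u <- allV, v <- allV].
Lemma mem_allE8 x : x \in allE8. Proof. by case: x. Qed.
Lemma mem_allV x : x \in allV.
Proof. case: x => a b; apply/allpairsP; exists (a,b); by rewrite !mem_allE8. Qed.
Lemma mem_allM x : x \in allM.
Proof. case: x => a b; apply/allpairsP; exists (a,b); by rewrite !mem_allV. Qed.

Lemma forall_F8 (P : pred F8) : [forall a, P a] = all (fun e => P (dec e)) allE8.
Proof.
apply/forallP/allP => [H e _|H a]; first exact: H.
by rewrite -(encK a); apply: H; rewrite mem_allE8.
Qed.
Lemma forall_V (P : pred 'rV[F8]_2) : [forall v, P v] = all (fun w => P (toV w)) allV.
Proof.
apply/forallP/allP => [H e _|H a]; first exact: H.
by rewrite -(ofVK a); apply: H; rewrite mem_allV.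
Qed.
Lemma forall_M (P : pred 'M[F8]_2) : [forall v, P v] = all (fun w => P (toM w)) allM.
Proof.
apply/forallP/allP => [H e _|H a]; first exact: H.
by rewrite -(ofMK a); apply: H; rewrite mem_allM.
Qed.
Lemma exists_M (P : pred 'M[F8]_2) : [exists v, P v] = has (fun w => P (toM w)) allM.
Proof.
apply/existsP/hasP => [[a Ha]|[w _ Hw]]; last by exists (toM w).
by exists (ofM a); rewrite ?mem_allM // ofMK.
Qed.

Lemma tfE G : torsion_free (toG G) = all (fun w => wedgeTC (nablaC G w) == dOC w) allV.
Proof. rewrite /torsion_free forall_V; apply: eq_all => w; by rewrite nablaE wedgeTE dOE dec_eq. Qed.

Lemma rlE G s : right_leibniz (toG G) (toS s) =
  all (fun w => all (fun a => nablaC G (ractC w a) == madd (rmulTC (nablaC G w) a) (sigC s (tensC w (dA8 a)))) allE8) allV.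
Proof.
rewrite /right_leibniz forall_V; apply: eq_all => w; rewrite forall_F8; apply: eq_all => a.
by rewrite ractE !nablaE rmulTE dAE tensE sigE toM_add toM_eq.
Qed.

Lemma bimodE s : bimod_sig (toS s) =
  all (fun T => all (fun a => sigC s (rmulTC T a) == rmulTC (sigC s T) a) allE8) allM.
Proof.
rewrite /bimod_sig forall_M; apply: eq_all => T; rewrite forall_F8; apply: eq_all => a.
by rewrite rmulTE !sigE rmulTE toM_eq.
Qed.

Lemma flatE G : flat (toG G) = all (fun w => curvC G w == vz) allV.
Proof. rewrite /flat forall_V; apply: eq_all => w; by rewrite curvE toV_0 toV_eq. Qed.

Lemma liftE t : is_lift (toM t) = all (fun a => rmulTC t a == msc a t) allE8 && (wedgeTC t == E1).
Proof.
rewrite /is_lift forall_F8; congr (_ && _); last by rewrite wedgeTE dec1 dec_eq.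
apply: eq_all => a; by rewrite rmulTE toM_sc toM_eq.
Qed.

Definition e4 (f : 'I_2 -> E8) : E8 := add8 (f i0) (f i1).
Definition eta1 (g P : m2) (w : v2) : v2 :=
  v4 (fun p => v4 (fun q => vsc (pairC P (tensC w (vsc (ent g p q) (eV p)))) (eV q))).
Definition eta2 (g P : m2) (w : v2) : v2 :=
  v4 (fun p => v4 (fun q => ractC (vsc (ent g p q) (eV p)) (pairC P (tensC (eV q) w)))).
Definition etaB g P := all (fun w => (eta1 g P w == w) && (eta2 g P w == w)) allV.
Definition ip1B (P : m2) := all (fun T => all (fun a => pairC P (rmulTC T a) == mul8 (pairC P T) a) allE8) allM.

Lemma invE g P : inv_pairing (toM g) (toM P) = ip1B P && etaB g P.
Proof.
rewrite /inv_pairing; congr (_ && _).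
  rewrite forall_M; apply: eq_all => T; rewrite forall_F8; apply: eq_all => a.
  by rewrite rmulTE !pairE dec_mul dec_eq.
rewrite forall_V; apply: eq_all => w.
rewrite [pair]lock [ract]lock !sum2 -!lock !toME !omE !toV_sc !tensE !pairE !toV_sc !ractE !toV_add !toV_eq.
reflexivity.
Qed.

Definition buildm (a c d : E8) : m2 := ((a, add8 (add8 (mul8 a E2) c) (mul8 d E3)), (c, d)).
Definition aj (j : 'I_2) : E8 := if z2 j then E4 else E2.
Definition SCe (G : gam) (i j : 'I_2) : m2 :=
  madd (nablaC G (ractC (eV i) (aj j))) (rmulTC (nablaC G (eV i)) (aj j)).
Definition SC (G : gam) : sm := ((SCe G i0 i0, SCe G i0 i1), (SCe G i1 i0, SCe G i1 i1)).

Definition e0 : v2 := (E1,E0).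
Definition e1 : v2 := (E0,E1).
Definition tensF (u v : v2) : m2 :=
  let R0 := R8 v.1 in let R1 := R8 v.2 in
  ((add8 (mul8 u.1 R0.1.1) (mul8 u.2 R0.2.1), add8 (mul8 u.1 R1.1.1) (mul8 u.2 R1.2.1)),
   (add8 (mul8 u.1 R0.1.2) (mul8 u.2 R0.2.2), add8 (mul8 u.1 R1.1.2) (mul8 u.2 R1.2.2))).
Lemma tensFE u v : tensC u v = tensF u v. Proof. reflexivity. Qed.
Definition ractF (v : v2) (a : E8) : v2 := vmul v (R8 a).
Definition rmulTF (T : m2) (a : E8) : m2 :=
  madd (madd (tensF (vsc T.1.1 e0) (ractF e0 a)) (tensF (vsc T.1.2 e0) (ractF e1 a)))
       (madd (tensF (vsc T.2.1 e1) (ractF e0 a)) (tensF (vsc T.2.2 e1) (ractF e1 a))).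
Lemma rmulTFE T a : rmulTC T a = rmulTF T a. Proof. reflexivity. Qed.
Definition nablaF (G : gam) (v : v2) : m2 :=
  madd (madd (msc v.1 G.1) (tensF (dA8 v.1) e0))
       (madd (msc v.2 G.2) (tensF (dA8 v.2) e1)).
Lemma nablaFE G v : nablaC G v = nablaF G v. Proof. reflexivity. Qed.
Definition sigF (s : sm) (T : m2) : m2 :=
  madd (madd (msc T.1.1 s.1.1) (msc T.1.2 s.1.2)) (madd (msc T.2.1 s.2.1) (msc T.2.2 s.2.2)).
Lemma sigFE s T : sigC s T = sigF s T. Proof. reflexivity. Qed.
Definition SCF (G : gam) : sm :=
  let r4 := R8 E4 in let r2 := R8 E2 in
  let N0 := nablaF G e0 in let N1 := nablaF G e1 in
  ((madd (nablaF G (vmul e0 r4)) (rmulTF N0 E4), madd (nablaF G (vmul e0 r2)) (rmulTF N0 E2)),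
   (madd (nablaF G (vmul e1 r4)) (rmulTF N1 E4), madd (nablaF G (vmul e1 r2)) (rmulTF N1 E2))).
Lemma SCFE G : SC G = SCF G. Proof. reflexivity. Qed.
Definition mcF (g : m2) (G : gam) (s : sm) (c : 'I_2) : m2 :=
  let t x p y k := sigF s (tensF (vsc x p) (vsc y k)) in
  let y00 := ent G.1 i0 c in let y01 := ent G.1 i1 c in
  let y10 := ent G.2 i0 c in let y11 := ent G.2 i1 c in
  madd (madd (nablaF G (vsc (ent g i0 c) e0)) (nablaF G (vsc (ent g i1 c) e1)))
   (madd (madd (madd (t g.1.1 e0 y00 e0) (t g.1.1 e0 y01 e1)) (madd (t g.1.2 e0 y10 e0) (t g.1.2 e0 y11 e1)))
         (madd (madd (t g.2.1 e1 y00 e0) (t g.2.1 e1 y01 e1)) (madd (t g.2.2 e1 y10 e0) (t g.2.2 e1 y11 e1)))).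
Lemma mcFE g G s c : mcC g G s c = mcF g G s c. Proof. reflexivity. Qed.
Definition mcBF g G s := (mcF g G s i0 == mz) && (mcF g G s i1 == mz).
Definition gC (beta : E8) := msc beta g0C.
Definition searchL (g : m2) : seq gam :=
  flatten [seq flatten [seq flatten [seq flatten [seq flatten [seq
     [seq (buildm a c d, buildm a' c' d') | d' <- allE8 & mcBF g (buildm a c d, buildm a' c' d') (SCF (buildm a c d, buildm a' c' d'))]
    | c' <- allE8] | a' <- allE8] | d <- allE8] | c <- allE8] | a <- allE8].

Lemma mul1_8 x : mul8 E1 x = x. Proof. by case: x. Qed.
Lemma mul0_8 x : mul8 E0 x = E0. Proof. by case: x. Qed.
Lemma add0_8 x : add8 E0 x = x. Proof. by case: x. Qed.
Lemma addx0_8 x : add8 x E0 = x. Proof. by case: x. Qed.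

Lemma nab_e0 G : nablaC G (eV i0) = G.1.
Proof.
case: G => [[[a b] [c d]] [[a' b'] [c' d']]].
cbv -[mul8 add8].
by rewrite !mul1_8 !mul0_8 !add0_8 !addx0_8.
Qed.
Lemma nab_e1 G : nablaC G (eV i1) = G.2.
Proof.
case: G => [[[a b] [c d]] [[a' b'] [c' d']]].
cbv -[mul8 add8].
by rewrite !mul1_8 !mul0_8 !add0_8 !addx0_8.
Qed.

Lemma oneF8 : mkF8 true false false = 1. Proof. by []. Qed.
Lemma zeroF8 : mkF8 false false false = 0. Proof. by []. Qed.

Definition bas (i j : 'I_2) : m2 := if z2 i then (if z2 j then ((E1,E0),(E0,E0)) else ((E0,E1),(E0,E0)))
  else (if z2 j then ((E0,E0),(E1,E0)) else ((E0,E0),(E0,E1))).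

Lemma sig_bas s i j : sig s (toM (bas i j)) = s (i, j).
Proof.
rewrite /sig !sum2 !toME.
case: (ord2 i) => ->; case: (ord2 j) => -> /=;
  by rewrite ?oneF8 ?zeroF8 ?scale1r ?scale0r ?addr0 ?add0r.
Qed.

Lemma tens_bas i j : tens (om i) (dA (dec (aj j))) = toM (bas i j).
Proof. rewrite omE dAE tensE; congr toM; by case: (ord2 i) => ->; case: (ord2 j) => ->. Qed.


Lemma QLC_char g G :
  QLC (toM g) (toG G) =
  [&& bimod_sig (toS (SC G)), right_leibniz (toG G) (toS (SC G)), torsion_free (toG G)
    & metric_compatible (toM g) (toG G) (toS (SC G))].
Proof.
apply/existsP/idP => [[s /and4P [Hb Hr Ht Hm]]|H]; last by exists (toS (SC G)).
suff E : s = toS (SC G) by rewrite -E; apply/and4P.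
apply/ffunP => [[i j]]; rewrite toSE.
have /eqP H := forallP (forallP Hr (om i)) (dec (aj j)).
rewrite tens_bas sig_bas in H.
have -> : s (i, j) = nabla (toG G) (ract (om i) (dec (aj j))) - rmulT (nabla (toG G) (om i)) (dec (aj j)).
  by rewrite H addrAC subrr add0r.
rewrite omE ractE !nablaE rmulTE toM_neg toM_add.
congr toM; rewrite /SCe; by case: (ord2 i) => ->; case: (ord2 j) => ->.
Qed.

Lemma wedge_shape_all : all (fun m => (wedgeTC m == E0) ==> (m == buildm m.1.1 m.2.1 m.2.2)) allM.
Proof. by vm_compute. Qed.
Lemma wedge_shape m : wedgeTC m == E0 -> m = buildm m.1.1 m.2.1 m.2.2.
Proof. by move=> H; apply/eqP; move/allP: wedge_shape_all => /(_ m (mem_allM m)); rewrite H. Qed.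

Lemma tf_shape G : torsion_free (toG G) ->
  G.1 = buildm G.1.1.1 G.1.2.1 G.1.2.2 /\ G.2 = buildm G.2.1.1 G.2.2.1 G.2.2.2.
Proof.
rewrite tfE => /allP H.
have H0 := H (eV i0) (mem_allV _); have H1 := H (eV i1) (mem_allV _).
rewrite nab_e0 in H0; rewrite nab_e1 in H1.
have D0 : dOC (eV i0) = E0 by vm_compute.
have D1 : dOC (eV i1) = E0 by vm_compute.
rewrite D0 in H0; rewrite D1 in H1.
by split; apply: wedge_shape.
Qed.

Lemma mem_searchL g a c d a' c' d' :
  mcBF g (buildm a c d, buildm a' c' d') (SCF (buildm a c d, buildm a' c' d')) ->
  (buildm a c d, buildm a' c' d') \in searchL g.
Proof.
move=> H; rewrite /searchL.
apply/flattenP; eexists; first by apply/mapP; exists a; [apply: mem_allE8|reflexivity].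
apply/flattenP; eexists; first by apply/mapP; exists c; [apply: mem_allE8|reflexivity].
apply/flattenP; eexists; first by apply/mapP; exists d; [apply: mem_allE8|reflexivity].
apply/flattenP; eexists; first by apply/mapP; exists a'; [apply: mem_allE8|reflexivity].
apply/flattenP; eexists; first by apply/mapP; exists c'; [apply: mem_allE8|reflexivity].
by apply: map_f; rewrite mem_filter H mem_allE8.
Qed.

Lemma mcBE g G : mcB g G (SC G) = mcBF g G (SCF G).
Proof. by rewrite /mcB /mcBF !mcFE SCFE. Qed.

Lemma QLC_search g G : QLC (toM g) (toG G) -> G \in searchL g.
Proof.
case: G => [[[a b] [c d]] [[a' b'] [c' d']]].
rewrite QLC_char => /and4P [_ _ Ht Hm]; rewrite metricE in Hm.
have [E1 E2] := tf_shape Ht.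
change (((a,b),(c,d)) = buildm a c d) in E1.
change (((a',b'),(c',d')) = buildm a' c' d') in E2.
rewrite E1 E2 in Hm *.
rewrite mcBE in Hm.
exact: (mem_searchL Hm).
Qed.

Definition bimodF (s : sm) :=
  all (fun T => all (fun a => sigF s (rmulTF T a) == rmulTF (sigF s T) a) allE8) allM.
Definition rlF (G : gam) (s : sm) :=
  all (fun w => all (fun a => nablaF G (ractF w a) == madd (rmulTF (nablaF G w) a) (sigF s (tensF w (dA8 a)))) allE8) allV.
Definition tfF (G : gam) := all (fun w => wedgeTC (nablaF G w) == dOC w) allV.
Definition goodF (g : m2) (G : gam) := let s := SCF G in [&& bimodF s, rlF G s, tfF G & mcBF g G s].

Lemma bimodFE s : all (fun T => all (fun a => sigC s (rmulTC T a) == rmulTC (sigC s T) a) allE8) allM = bimodF s.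
Proof. reflexivity. Qed.
Lemma rlFE G s :
  all (fun w => all (fun a => nablaC G (ractC w a) == madd (rmulTC (nablaC G w) a) (sigC s (tensC w (dA8 a)))) allE8) allV
  = rlF G s.
Proof. reflexivity. Qed.
Lemma tfFE G : all (fun w => wedgeTC (nablaC G w) == dOC w) allV = tfF G.
Proof. reflexivity. Qed.
Lemma mcBE2 g G s : mcB g G s = mcBF g G s.
Proof. by rewrite /mcB /mcBF !mcFE. Qed.

Lemma good_QLC g G : goodF g G -> QLC (toM g) (toG G).
Proof.
move=> H; rewrite QLC_char bimodE rlE tfE metricE SCFE bimodFE rlFE tfFE mcBE2.
exact: H.
Qed.

Lemma Rmat0 : Rmat 0 = 0.
Proof. by rewrite /Rmat /= !scale0r !addr0. Qed.
Lemma tens0 v : tens 0 v = 0.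
Proof. by apply/matrixP=> i j; rewrite !mxE sum2 !mxE !mul0r addr0. Qed.
Lemma pair0 P : pair P 0 = 0.
Proof. by rewrite /pair !sum2 !mxE !mul0r !addr0. Qed.

Lemma ricci_flat g P t Gam : flat Gam -> Ricci g P t Gam = 0.
Proof.
move/forallP => Hf.
have Hc q : curv Gam (om q) = 0 by apply/eqP; exact: Hf.
apply/matrixP => n l; rewrite !mxE [pair]lock [ract]lock [tens]lock [curv]lock !sum2 -!lock !Hc !mxE.
by rewrite /ract !Rmat0 !mulmx0 !tens0 !pair0 !addr0.
Qed.

Definition RicC (g P t : m2) (G : gam) : m2 :=
  mkm (fun n l => e4 (fun p => e4 (fun q => e4 (fun m =>
    pairC P (tensC (ractC (vsc (ent g p q) (eV p)) (vent (curvC G (eV q)) l)) (vsc (ent t m n) (eV m))))))).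

Lemma ent_mk f i j : ent (mkm f) i j = f i j.
Proof. rewrite /ent /=; by case: (ord2 i) => ->; case: (ord2 j) => ->. Qed.

Lemma RicciE g P t G : Ricci (toM g) (toM P) (toM t) (toG G) = toM (RicC g P t G).
Proof.
apply/matrixP => n l; rewrite !mxE [pair]lock [ract]lock [tens]lock [curv]lock !sum2 -!lock.
rewrite ent_mk !toME !omE.
rewrite !curvE !toVE.
rewrite !toV_sc.
rewrite !ractE ?toV_sc !tensE !pairE !dec_add.
reflexivity.
Qed.

Definition b00 : m2 := ((E1,E0),(E0,E0)).
Definition b01 : m2 := ((E0,E1),(E0,E0)).
Definition b10 : m2 := ((E0,E0),(E1,E0)).
Definition b11 : m2 := ((E0,E0),(E0,E1)).
Definition C4t := (m2 * m2 * m2 * m2)%type.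
Definition mkC (a : E8) : C4t := (rmulTF b00 a, rmulTF b01 a, rmulTF b10 a, rmulTF b11 a).
Definition Ctab (a : E8) : C4t := Eval vm_compute in
  match a with E0 => mkC E0 | E1 => mkC E1 | E2 => mkC E2 | E3 => mkC E3
  | E4 => mkC E4 | E5 => mkC E5 | E6 => mkC E6 | E7 => mkC E7 end.
Definition rlin (C : C4t) (T : m2) : m2 :=
  madd (madd (msc T.1.1 C.1.1.1) (msc T.1.2 C.1.1.2)) (madd (msc T.2.1 C.1.2) (msc T.2.2 C.2)).
Lemma rmulT_lin_all : all (fun T => all (fun a => rmulTF T a == rlin (Ctab a) T) allE8) allM.
Proof. vm_compute. reflexivity. Qed.
Lemma rmulT_lin T a : rmulTF T a = rlin (Ctab a) T.
Proof. apply/eqP; exact: allP (allP rmulT_lin_all T (mem_allM T)) a (mem_allE8 a). Qed.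

Definition K0 (a : E8) : m2 := Eval vm_compute in
  match a with E0 => tensF (dA8 E0) e0 | E1 => tensF (dA8 E1) e0 | E2 => tensF (dA8 E2) e0
  | E3 => tensF (dA8 E3) e0 | E4 => tensF (dA8 E4) e0 | E5 => tensF (dA8 E5) e0
  | E6 => tensF (dA8 E6) e0 | E7 => tensF (dA8 E7) e0 end.
Definition K1 (a : E8) : m2 := Eval vm_compute in
  match a with E0 => tensF (dA8 E0) e1 | E1 => tensF (dA8 E1) e1 | E2 => tensF (dA8 E2) e1
  | E3 => tensF (dA8 E3) e1 | E4 => tensF (dA8 E4) e1 | E5 => tensF (dA8 E5) e1
  | E6 => tensF (dA8 E6) e1 | E7 => tensF (dA8 E7) e1 end.
Definition nablaK (G : gam) (v : v2) : m2 :=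
  madd (madd (msc v.1 G.1) (K0 v.1)) (madd (msc v.2 G.2) (K1 v.2)).
Lemma nablaKE G v : nablaF G v = nablaK G v.
Proof. case: v => a b; by case: a; case: b. Qed.

Definition colPK (p : bool) (x y : E8) : v2 :=
  let R := R8 y in if p then (mul8 x R.1.1, mul8 x R.1.2) else (mul8 x R.2.1, mul8 x R.2.2).
Definition tensPK (p k : bool) (x y : E8) : m2 :=
  let c := colPK p x y in if k then ((c.1, E0), (c.2, E0)) else ((E0, c.1), (E0, c.2)).
Definition ep (p : bool) : v2 := if p then e0 else e1.
Definition tPKok (x y : E8) (p k : bool) := tensF (vsc x (ep p)) (vsc y (ep k)) == tensPK p k x y.
Lemma tensPK_all : all (fun x => all (fun y =>
   [&& tPKok x y true true, tPKok x y true false, tPKok x y false true & tPKok x y false false]) allE8) allE8.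
Proof. vm_compute. reflexivity. Qed.
Lemma tensPKE p k x y : tensF (vsc x (ep p)) (vsc y (ep k)) = tensPK p k x y.
Proof.
apply/eqP; have /and4P [H1 H2 H3 H4] := allP (allP tensPK_all x (mem_allE8 x)) y (mem_allE8 y).
by case: p; case: k.
Qed.

Lemma msc0 m : msc E0 m = mz.
Proof. by case: m => [[a b] [c d]]; rewrite /msc !mul0_8. Qed.
Lemma madd0 m : madd m mz = m.
Proof. by case: m => [[a b] [c d]]; rewrite /madd !addx0_8. Qed.

Lemma mz_add m : madd mz m = m.
Proof. by case: m => [[a b] [c d]]; rewrite /madd !add0_8. Qed.

Definition sigcol (s : sm) (k : bool) (c : v2) : m2 :=
  if k then madd (msc c.1 s.1.1) (msc c.2 s.2.1) else madd (msc c.1 s.1.2) (msc c.2 s.2.2).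
Lemma sigPK s p k x y : sigF s (tensPK p k x y) = sigcol s k (colPK p x y).
Proof. case: k; rewrite /sigF /tensPK /sigcol; cbv beta iota zeta delta [fst snd]; by rewrite !msc0 ?(madd0 (msc _ _)) ?(mz_add (msc _ _)). Qed.

Definition mcO (g : m2) (G : gam) (s : sm) (c : 'I_2) : m2 :=
  let y00 := ent G.1 i0 c in let y01 := ent G.1 i1 c in
  let y10 := ent G.2 i0 c in let y11 := ent G.2 i1 c in
  let t x p y k := sigcol s k (colPK p x y) in
  madd (madd (nablaK G (vsc (ent g i0 c) e0)) (nablaK G (vsc (ent g i1 c) e1)))
   (madd (madd (madd (t g.1.1 true y00 true) (t g.1.1 true y01 false)) (madd (t g.1.2 true y10 true) (t g.1.2 true y11 false)))
         (madd (madd (t g.2.1 false y00 true) (t g.2.1 false y01 false)) (madd (t g.2.2 false y10 true) (t g.2.2 false y11 false)))).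

Lemma mcOE g G s c : mcF g G s c = mcO g G s c.
Proof.
have E1 x y : tensF (vsc x e0) (vsc y e0) = tensPK true true x y := tensPKE true true x y.
have E2 x y : tensF (vsc x e0) (vsc y e1) = tensPK true false x y := tensPKE true false x y.
have E3 x y : tensF (vsc x e1) (vsc y e0) = tensPK false true x y := tensPKE false true x y.
have E4 x y : tensF (vsc x e1) (vsc y e1) = tensPK false false x y := tensPKE false false x y.
rewrite /mcF /mcO; cbv zeta.
rewrite !nablaKE !E1 !E2 !E3 !E4 !sigPK.
reflexivity.
Qed.

Definition C4 := Eval vm_compute in Ctab E4.
Definition C2 := Eval vm_compute in Ctab E2.
Definition v40 := Eval vm_compute in vmul e0 (R8 E4).
Definition v20 := Eval vm_compute in vmul e0 (R8 E2).
Definition v41 := Eval vm_compute in vmul e1 (R8 E4).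
Definition v21 := Eval vm_compute in vmul e1 (R8 E2).
Definition SCO (G : gam) : sm :=
  let N0 := nablaK G e0 in let N1 := nablaK G e1 in
  ((madd (nablaK G v40) (rlin C4 N0), madd (nablaK G v20) (rlin C2 N0)),
   (madd (nablaK G v41) (rlin C4 N1), madd (nablaK G v21) (rlin C2 N1))).
Lemma SCOE G : SCF G = SCO G.
Proof. rewrite /SCF; cbv zeta. rewrite !rmulT_lin !nablaKE. reflexivity. Qed.

Definition mcBO g G s := (mcO g G s i0 == mz) && (mcO g G s i1 == mz).
Lemma mcBOE g G : mcBF g G (SCF G) = mcBO g G (SCO G).
Proof. by rewrite /mcBF !mcOE SCOE. Qed.

Definition searchO (g : m2) : seq gam :=
  flatten [seq flatten [seq flatten [seq flatten [seq flatten [seq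
     [seq (buildm a c d, buildm a' c' d') | d' <- allE8 & mcBO g (buildm a c d, buildm a' c' d') (SCO (buildm a c d, buildm a' c' d'))]
    | c' <- allE8] | a' <- allE8] | d <- allE8] | c <- allE8] | a <- allE8].

Lemma mem_searchO g a c d a' c' d' :
  mcBO g (buildm a c d, buildm a' c' d') (SCO (buildm a c d, buildm a' c' d')) ->
  (buildm a c d, buildm a' c' d') \in searchO g.
Proof.
move=> H; rewrite /searchO.
apply/flattenP; eexists; first by apply/mapP; exists a; [apply: mem_allE8|reflexivity].
apply/flattenP; eexists; first by apply/mapP; exists c; [apply: mem_allE8|reflexivity].
apply/flattenP; eexists; first by apply/mapP; exists d; [apply: mem_allE8|reflexivity].
apply/flattenP; eexists; first by apply/mapP; exists a'; [apply: mem_allE8|reflexivity].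
apply/flattenP; eexists; first by apply/mapP; exists c'; [apply: mem_allE8|reflexivity].
by apply: map_f; rewrite mem_filter H mem_allE8.
Qed.

Lemma QLC_searchO g G : QLC (toM g) (toG G) -> G \in searchO g.
Proof.
case: G => [[[a b] [c d]] [[a' b'] [c' d']]].
rewrite QLC_char => /and4P [_ _ Ht Hm]; rewrite metricE in Hm.
have [E1 E2] := tf_shape Ht.
change (((a,b),(c,d)) = buildm a c d) in E1.
change (((a',b'),(c',d')) = buildm a' c' d') in E2.
rewrite E1 E2 in Hm *.
rewrite mcBE mcBOE in Hm.
exact: (mem_searchO Hm).
Qed.

Definition bimodO (s : sm) :=
  all (fun T => all (fun a => let C := Ctab a in sigF s (rlin C T) == rlin C (sigF s T)) allE8) allM.
Lemma bimodFO s : bimodF s = bimodO s.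
Proof. rewrite /bimodF /bimodO; apply: eq_all => T; apply: eq_all => a; by rewrite !rmulT_lin. Qed.
Definition goodO (g : m2) (G : gam) := let s := SCF G in [&& bimodO s, rlF G s, tfF G & mcBF g G s].
Lemma goodO_QLC g G : goodO g G -> QLC (toM g) (toG G).
Proof. move=> H; apply: good_QLC; move: H; by rewrite /goodO /goodF bimodFO. Qed.

Definition flatB G := all (fun w => curvC G w == vz) allV.
Definition liftB t := all (fun a => rmulTC t a == msc a t) allE8 && (wedgeTC t == E1).
Definition ricB g P G t := madd (RicC g P t G) (msc (pairC P (RicC g P t G)) g) == mz.

Lemma lastE g P G t :
  (is_lift (toM t) && (Ricci (toM g) (toM P) (toM t) (toG G) + Scal (toM g) (toM P) (toM t) (toG G) *: toM g == 0))
  = liftB t && ricB g P G t.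
Proof. by rewrite liftE /Scal RicciE pairE toM_sc toM_add toM_0 toM_eq. Qed.

Lemma card_gam (L : seq gam) (P : pred {ffun 'I_2 -> 'M[F8]_2}) :
  uniq L -> (forall G, P (toG G) = (G \in L)) -> #|[set Gam | P Gam]| = size L.
Proof.
move=> U H.
have -> : [set Gam | P Gam] = [set Gam in map toG L].
  apply/setP => Gam; rewrite !inE -[Gam]ofGK H mem_map //; exact: toG_inj.
rewrite cardsE -(size_map toG); apply/card_uniqP.
by rewrite map_inj_uniq //; exact: toG_inj.
Qed.

Lemma has_filter_and (T : Type) (a b : pred T) (s : seq T) :
  has (fun x => a x && b x) s = has b (filter a s).
Proof. by elim: s => //= x s IH; case: (a x) => /=; rewrite IH. Qed.

Lemma main_gen eb (Lc : seq gam) (Pm : m2) (Lifts : seq m2) :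
  searchO (gC eb) = Lc ->
  all (goodO (gC eb)) Lc ->
  uniq Lc ->
  ip1B Pm && etaB (gC eb) Pm ->
  all (fun p => [&& eta1 (gC eb) p (eV i0) == eV i0, eta1 (gC eb) p (eV i1) == eV i1,
     eta2 (gC eb) p (eV i0) == eV i0 & eta2 (gC eb) p (eV i1) == eV i1] ==> (p == Pm)) allM ->
  [seq t <- allM | liftB t] = Lifts ->
  size Lc = 12%N ->
  size [seq G <- Lc | flatB G] = 5%N ->
  size [seq G <- Lc | ~~ flatB G && has (ricB (gC eb) Pm G) Lifts] = 1%N ->
  let g := toM (gC eb) in
  (exists P, inv_pairing g P) /\
  forall P : 'M[F8]_2, inv_pairing g P ->
    [/\ #|[set Gam | QLC g Gam]| = 12%N,
        #|[set Gam | QLC g Gam && flat Gam]| = 5%N,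
        (forall Gam, QLC g Gam -> flat Gam ->
           forall t, is_lift t -> Ricci g P t Gam = 0)
      & #|[set Gam | [&& QLC g Gam, ~~ flat Gam &
            [exists t, is_lift t && (Ricci g P t Gam + Scal g P t Gam *: g == 0)]]]| = 1%N].
Proof.
move=> HS Hgood U Hip Huniq HL H12 H5 H1 g.
have QLCiff G : QLC g (toG G) = (G \in Lc).
  apply/idP/idP => [/QLC_searchO|HG]; first by rewrite HS.
  exact: goodO_QLC (allP Hgood G HG).
split; first by exists (toM Pm); rewrite /g invE.
move=> P HP.
have EP : P = toM Pm.
  move: HP; rewrite -[P]ofMK invE => /andP [_ /allP He].
  have /andP [Ha Hc] := He (eV i0) (mem_allV _).
  have /andP [Hb Hd] := He (eV i1) (mem_allV _).
  have := allP Huniq (ofM P) (mem_allM _).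
  by rewrite Ha Hb Hc Hd => /eqP ->.
subst P.
split.
- rewrite -H12; apply: card_gam => // G; exact: QLCiff.
- rewrite -H5; apply: card_gam; first exact: filter_uniq.
  by move=> G; rewrite QLCiff flatE mem_filter andbC.
- by move=> Gam _ Hf t _; exact: ricci_flat.
- apply: (etrans _ H1); apply: card_gam; first exact: filter_uniq.
  move=> G; rewrite QLCiff flatE mem_filter exists_M.
  rewrite (eq_has (a2 := fun t => liftB t && ricB (gC eb) Pm G t)); last by move=> t; exact: lastE.
  rewrite has_filter_and HL.
  by case: (G \in Lc); rewrite ?andbF ?andbT.
Qed.

Definition LcE4 : seq gam := [:: (((E0,E7),(E3,E7)),((E1,E1),(E5,E2)));
  (((E0,E1),(E7,E2)),((E6,E4),(E3,E2)));
  (((E1,E2),(E7,E6)),((E3,E7),(E2,E1)));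
  (((E2,E0),(E0,E7)),((E5,E3),(E1,E3)));
  (((E2,E0),(E2,E2)),((E5,E2),(E7,E5)));
  (((E2,E5),(E4,E3)),((E2,E1),(E7,E5)));
  (((E3,E3),(E0,E3)),((E0,E0),(E0,E0)));
  (((E3,E0),(E2,E7)),((E0,E6),(E6,E0)));
  (((E4,E5),(E3,E1)),((E2,E7),(E1,E5)));
  (((E5,E3),(E5,E4)),((E0,E7),(E0,E6)));
  (((E5,E0),(E5,E5)),((E0,E0),(E0,E0)));
  (((E7,E4),(E4,E1)),((E4,E4),(E2,E1)))].
Definition LcE5 : seq gam := [:: (((E0,E0),(E0,E0)),((E5,E5),(E0,E5)));
  (((E0,E0),(E0,E0)),((E6,E0),(E6,E6)));
  (((E0,E3),(E3,E0)),((E3,E2),(E6,E5)));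
  (((E1,E0),(E2,E0)),((E3,E0),(E1,E6)));
  (((E1,E6),(E5,E4)),((E1,E5),(E7,E0)));
  (((E1,E5),(E6,E4)),((E4,E7),(E7,E3)));
  (((E2,E7),(E0,E1)),((E7,E2),(E2,E1)));
  (((E2,E1),(E7,E5)),((E6,E2),(E2,E4)));
  (((E5,E3),(E0,E7)),((E6,E6),(E5,E5)));
  (((E5,E6),(E4,E3)),((E2,E4),(E5,E3)));
  (((E6,E4),(E2,E6)),((E2,E4),(E6,E2)));
  (((E7,E7),(E3,E6)),((E1,E3),(E7,E2)))].
Definition LcE3 : seq gam := [:: (((E0,E5),(E0,E3)),((E1,E3),(E3,E5)));
  (((E0,E2),(E3,E4)),((E7,E3),(E6,E2)));
  (((E2,E3),(E4,E1)),((E4,E4),(E4,E3)));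
  (((E2,E5),(E5,E7)),((E1,E7),(E2,E6)));
  (((E3,E0),(E3,E3)),((E3,E0),(E3,E3)));
  (((E3,E6),(E6,E2)),((E4,E2),(E0,E6)));
  (((E4,E6),(E1,E5)),((E4,E3),(E4,E5)));
  (((E4,E7),(E3,E4)),((E7,E0),(E7,E7)));
  (((E4,E7),(E7,E3)),((E5,E1),(E2,E7)));
  (((E5,E3),(E7,E1)),((E6,E4),(E5,E0)));
  (((E6,E6),(E0,E6)),((E6,E6),(E0,E6)));
  (((E7,E4),(E5,E5)),((E2,E1),(E4,E4)))].
Definition Lifts : seq m2 := [:: ((E0, E0), (E3, E5)); ((E1, E3), (E0, E0)); ((E2, E6), (E5, E2)); ((E3, E5), (E6, E7));
  ((E4, E1), (E2, E6)); ((E5, E2), (E1, E3)); ((E6, E7), (E4, E1)); ((E7, E4), (E7, E4))].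
Definition PE4 : m2 := ((E0,E7),(E7,E1)).
Definition PE5 : m2 := ((E1,E3),(E3,E1)).
Definition PE3 : m2 := ((E1,E4),(E4,E0)).

Lemma liftsL : [seq t <- allM | liftB t] = Lifts. Proof. vm_cast_no_check (erefl Lifts). Qed.
Definition uniqP (g Pm : m2) := all (fun p => [&& eta1 g p (eV i0) == eV i0, eta1 g p (eV i1) == eV i1,
     eta2 g p (eV i0) == eV i0 & eta2 g p (eV i1) == eV i1] ==> (p == Pm)) allM.

Ltac vmt := vm_cast_no_check (erefl true).
Lemma sE4 : searchO (gC E4) = LcE4. Proof. vm_cast_no_check (erefl LcE4). Qed.
Lemma gE4 : all (goodO (gC E4)) LcE4. Proof. vmt. Qed.
Lemma uE4 : uniq LcE4. Proof. vmt. Qed.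
Lemma iE4 : ip1B PE4 && etaB (gC E4) PE4. Proof. vmt. Qed.
Lemma pE4 : uniqP (gC E4) PE4. Proof. vmt. Qed.
Lemma zE4 : size LcE4 = 12%N. Proof. reflexivity. Qed.
Lemma fE4 : size [seq G <- LcE4 | flatB G] = 5%N. Proof. vm_cast_no_check (erefl 5%N). Qed.
Lemma rE4 : size [seq G <- LcE4 | ~~ flatB G && has (ricB (gC E4) PE4 G) Lifts] = 1%N.
Proof. vm_cast_no_check (erefl 1%N). Qed.

Lemma sE5 : searchO (gC E5) = LcE5. Proof. vm_cast_no_check (erefl LcE5). Qed.
Lemma gE5 : all (goodO (gC E5)) LcE5. Proof. vmt. Qed.
Lemma uE5 : uniq LcE5. Proof. vmt. Qed.
Lemma iE5 : ip1B PE5 && etaB (gC E5) PE5. Proof. vmt. Qed.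
Lemma pE5 : uniqP (gC E5) PE5. Proof. vmt. Qed.
Lemma zE5 : size LcE5 = 12%N. Proof. reflexivity. Qed.
Lemma fE5 : size [seq G <- LcE5 | flatB G] = 5%N. Proof. vm_cast_no_check (erefl 5%N). Qed.
Lemma rE5 : size [seq G <- LcE5 | ~~ flatB G && has (ricB (gC E5) PE5 G) Lifts] = 1%N.
Proof. vm_cast_no_check (erefl 1%N). Qed.

Lemma sE3 : searchO (gC E3) = LcE3. Proof. vm_cast_no_check (erefl LcE3). Qed.
Lemma gE3 : all (goodO (gC E3)) LcE3. Proof. vmt. Qed.
Lemma uE3 : uniq LcE3. Proof. vmt. Qed.
Lemma iE3 : ip1B PE3 && etaB (gC E3) PE3. Proof. vmt. Qed.
Lemma pE3 : uniqP (gC E3) PE3. Proof. vmt. Qed.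
Lemma zE3 : size LcE3 = 12%N. Proof. reflexivity. Qed.
Lemma fE3 : size [seq G <- LcE3 | flatB G] = 5%N. Proof. vm_cast_no_check (erefl 5%N). Qed.
Lemma rE3 : size [seq G <- LcE3 | ~~ flatB G && has (ricB (gC E3) PE3 G) Lifts] = 1%N.
Proof. vm_cast_no_check (erefl 1%N). Qed.

Lemma gEq (beta : F8) (eb : E8) : beta = dec eb -> beta *: g0 = toM (gC eb).
Proof. by move=> ->; rewrite g0E toM_sc. Qed.

Theorem mainTheorem10 :
  forall beta : F8, beta \in [:: yA * yA; 1 + yA * yA; 1 + yA] ->
  let g := beta *: g0 in
  (exists P, inv_pairing g P) /\
  forall P : 'M[F8]_2, inv_pairing g P ->
    [/\ #|[set Gam | QLC g Gam]| = 12%N,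
        #|[set Gam | QLC g Gam && flat Gam]| = 5%N,
        (forall Gam, QLC g Gam -> flat Gam ->
           forall t, is_lift t -> Ricci g P t Gam = 0)
      & #|[set Gam | [&& QLC g Gam, ~~ flat Gam &
            [exists t, is_lift t && (Ricci g P t Gam + Scal g P t Gam *: g == 0)]]]| = 1%N].
Proof.
move=> beta; rewrite !inE => /or3P [] /eqP ->.
- rewrite (@gEq _ E4) //; exact: (main_gen sE4 gE4 uE4 iE4 pE4 liftsL zE4 fE4 rE4).
- rewrite (@gEq _ E5) //; exact: (main_gen sE5 gE5 uE5 iE5 pE5 liftsL zE5 fE5 rE5).
- rewrite (@gEq _ E3) //; exact: (main_gen sE3 gE3 uE3 iE3 pE3 liftsL zE3 fE3 rE3).
Qed.
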